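(* Let $k\ge2$ and let $\mathcal X=\{x_1,\dots,x_{k+1}\}\subset\mathbb R^d$ be in general position with $c(\mathcal X)\in\sigma(\mathcal X)$. Suppose the facet $\hat{\mathcal X}_{\min}$ of $\mathcal X$ whose affine hull is closest to $c(\mathcal X)$ is unique. Then $c(\hat{\mathcal X}_{\min})\in\sigma(\hat{\mathcal X}_{\min})$.
   Context: For a set $\mathcal Y$ of $m+1$ affinely independent points in $\mathbb R^d$, $c(\mathcal Y)$ is the point equidistant from all points of $\mathcal Y$ that minimizes this common distance (equivalently, the circumcenter of $\mathcal Y$ within its affine hull), and $\sigma(\mathcal Y)$ is the open geometric $m$-simplex spanned by $\mathcal Y$ (its relative interior). The facets of $\mathcal X$ are the sets $\mathcal X\setminus\{x_i\}$; $\hat{\mathcal X}_{\min}$ is the facet minimizing the Euclidean distance from $c(\mathcal X)$ to its affine hull. *)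

(* Defs.v *)
(* Points of R^d are row vectors 'rV[R]_d over a real closed field R
   (the statement is first-order algebraic, so rcfType covers the reals). *)
From HB Require Import structures.
From mathcomp Require Import all_boot all_order all_algebra.
Set Implicit Arguments. Unset Strict Implicit. Unset Printing Implicit Defensive.
Import Order.TTheory GRing.Theory Num.Theory.
Local Open Scope ring_scope.

Section Simplex.
Variables (R : rcfType) (d : nat).

Definition enorm (v : 'rV[R]_d) : R := Num.sqrt (\sum_(j < d) (v 0 j) ^+ 2).
Definition edist (x y : 'rV[R]_d) : R := enorm (x - y).

Definition aff_indep (n : nat) (Y : 'I_n -> 'rV[R]_d) : Prop :=
  forall l : 'I_n -> R,
    \sum_(i < n) l i = 0 -> \sum_(i < n) l i *: Y i = 0 -> forall i, l i = 0.

Definition in_aff (n : nat) (Y : 'I_n -> 'rV[R]_d) (p : 'rV[R]_d) : Prop :=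
  exists l : 'I_n -> R, \sum_(i < n) l i = 1 /\ p = \sum_(i < n) l i *: Y i.

Definition in_open_simplex (n : nat) (Y : 'I_n -> 'rV[R]_d) (p : 'rV[R]_d) : Prop :=
  exists l : 'I_n -> R, (forall i, 0 < l i) /\ \sum_(i < n) l i = 1 /\
    p = \sum_(i < n) l i *: Y i.

Definition is_circumcenter (n : nat) (Y : 'I_n -> 'rV[R]_d) (c : 'rV[R]_d) : Prop :=
  in_aff Y c /\ forall i j, edist c (Y i) = edist c (Y j).

Definition is_dist_aff (n : nat) (Y : 'I_n -> 'rV[R]_d) (c : 'rV[R]_d) (r : R) : Prop :=
  (exists p, in_aff Y p /\ edist c p = r) /\
  (forall q, in_aff Y q -> r <= edist c q).

Definition facet (k : nat) (X : 'I_k.+1 -> 'rV[R]_d) (i : 'I_k.+1) : 'I_k -> 'rV[R]_d :=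
  fun j => X (lift i j).

End Simplex.

(* Main.v *)
Require Import Defs.
From HB Require Import structures.
From mathcomp Require Import all_boot all_order all_algebra.
From mathcomp Require Import ring lra.
Import Order.TTheory GRing.Theory Num.Theory.
Local Open Scope ring_scope.

Set Implicit Arguments. Unset Strict Implicit.
Section Aux.
Variables (R : rcfType) (d : nat).
Implicit Types (u v : 'rV[R]_d).

Definition sqn v : R := \sum_(j < d) (v 0 j) ^+ 2.
Definition dot u v : R := \sum_(j < d) u 0 j * v 0 j.

Lemma sqn_ge0 v : 0 <= sqn v.
Proof. by apply: sumr_ge0 => j _; rewrite sqr_ge0. Qed.

Lemma edistE u v : edist u v = Num.sqrt (sqn (u - v)).
Proof. by []. Qed.

Lemma dot_sum u n (l : 'I_n -> R) (Y : 'I_n -> 'rV[R]_d) :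
  dot u (\sum_(i < n) l i *: Y i) = \sum_(i < n) l i * dot u (Y i).
Proof.
rewrite /dot; under eq_bigr => j _ do rewrite summxE big_distrr.
rewrite exchange_big; apply: eq_bigr => i _; rewrite mulr_sumr.
by apply: eq_bigr => j _; rewrite mxE /= mulrCA.
Qed.

Lemma sqn_diff c c0 x :
  sqn (c - x) - sqn (c0 - x) = sqn c - sqn c0 - 2 * dot (c - c0) x.
Proof.
rewrite /sqn /dot mulr_sumr -!sumrB; apply: eq_bigr => j _; rewrite !mxE; ring.
Qed.

Lemma sqn_split c c0 p :
  sqn (c - p) = sqn (c - c0) + 2 * dot (c - c0) (c0 - p) + sqn (c0 - p).
Proof.
rewrite /sqn /dot mulr_sumr -!big_split; apply: eq_bigr => j _ /=; rewrite !mxE; ring.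
Qed.

Lemma dotB u v w : dot u (v - w) = dot u v - dot u w.
Proof. by rewrite /dot -sumrB; apply: eq_bigr => j _; rewrite !mxE; ring. Qed.

Lemma sqnZ t u : sqn (t *: u) = t ^+ 2 * sqn u.
Proof. by rewrite /sqn mulr_sumr; apply: eq_bigr => j _; rewrite !mxE; ring. Qed.

Lemma edist_eq a x y : edist a x = edist a y -> sqn (a - x) = sqn (a - y).
Proof.
by rewrite !edistE => /eqP; rewrite eqr_sqrt ?sqn_ge0 // => /eqP.
Qed.
End Aux.

Theorem mainTheorem17 (R : rcfType) (d k : nat) (X : 'I_k.+1 -> 'rV[R]_d) :
  (2 <= k)%N ->
  aff_indep X ->
  forall c : 'rV[R]_d, is_circumcenter X c -> in_open_simplex X c ->
  forall D : 'I_k.+1 -> R, (forall i, is_dist_aff (facet X i) c (D i)) ->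
  forall i0 : 'I_k.+1, (forall i, i != i0 -> D i0 < D i) ->
  forall c0 : 'rV[R]_d, is_circumcenter (facet X i0) c0 ->
  in_open_simplex (facet X i0) c0.
Proof.
move=> hk hind c [_ hceq] [lam [lpos [lsum lc]]] D hD i0 hmin c0 [[mu [musum mc0]] hc0eq].
case: (boolP [forall a, 0 < mu a]) => [/forallP hpos | ].
  by exists mu.
move/forallPn => [j]; rewrite -leNgt => hmuj.
exfalso.
set j' := lift i0 j.
have hlt : D i0 < D j' by apply: hmin; rewrite eq_sym neq_lift.
have [[p [[nu [nusum np]] hpD]] _] := hD i0.
have [_ hDj] := hD j'.
set w := c - c0.
have hw : forall a, dot w (X (lift i0 a)) = dot w (X j').
  move=> a.
  have e1 := edist_eq (hceq (lift i0 a) j').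
  have e2 := edist_eq (hc0eq a j); rewrite /facet in e2.
  have := sqn_diff c c0 (X (lift i0 a)); rewrite e1 e2 sqn_diff.
  by move/eqP; rewrite -/w (inj_eq (addrI _)) eqr_opp (inj_eq (mulfI _)) ?pnatr_eq0 // => /eqP.
have hwS : forall nu0 : 'I_k -> R, \sum_(i < k) nu0 i = 1 ->
    dot w (\sum_(i < k) nu0 i *: facet X i0 i) = dot w (X j').
  move=> nu0 hs; rewrite dot_sum; under eq_bigr => i _ do rewrite /facet hw.
  by rewrite -big_distrl /= hs mul1r.
have hcp : sqn w <= sqn (c - p).
  rewrite (sqn_split c c0 p) -/w dotB np mc0 !hwS // subrr mulr0 addr0.
  by rewrite lerDl sqn_ge0.
set t := lam j' / (lam j' - mu j).
have hden : 0 < lam j' - mu j by have := lpos j'; lra.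
have ht0 : 0 < t by rewrite /t divr_gt0.
have ht1 : t <= 1 by rewrite /t ler_pdivrMr // mul1r; lra.
pose mu' (i : 'I_k.+1) := if unlift i0 i is Some a then mu a else 0.
have mu'l : forall a, mu' (lift i0 a) = mu a by move=> a; rewrite /mu' liftK.
have mu'sum : \sum_i mu' i = 1.
  rewrite (bigD1_ord i0) //= {1}/mu' unlift_none add0r.
  by under eq_bigr do rewrite mu'l.
have mu'c0 : \sum_i mu' i *: X i = c0.
  rewrite (bigD1_ord i0) //= {1}/mu' unlift_none scale0r add0r mc0.
  by under eq_bigr do rewrite mu'l.
pose rho (i : 'I_k.+1) := (1 - t) * lam i + t * mu' i.
have rhoj : rho j' = 0.
  rewrite /rho mu'l /t; field; by rewrite gt_eqF.
have rhosum : \sum_i rho i = 1.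
  by rewrite /rho big_split /= -!mulr_sumr lsum mu'sum; ring.
have rhovec : \sum_i rho i *: X i = (1 - t) *: c + t *: c0.
  rewrite -mu'c0 lc !scaler_sumr -big_split; apply: eq_bigr => i _.
  by rewrite /rho scalerDl !scalerA.
set q := \sum_(m < k) rho (lift j' m) *: X (lift j' m).
have hq : q = (1 - t) *: c + t *: c0.
  by rewrite -rhovec (bigD1_ord j') //= rhoj scale0r add0r.
have qin : in_aff (facet X j') q.
  exists (fun m => rho (lift j' m)); split => //.
  by move: rhosum; rewrite (bigD1_ord j') //= rhoj add0r.
have hDq := hDj q qin.
have hcq : c - q = t *: w.
  by rewrite hq /w; apply/rowP => m; rewrite !mxE; ring.
have : edist c q <= D i0.
  rewrite -hpD !edistE ler_sqrt ?sqn_ge0 // hcq sqnZ.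
  apply: le_trans hcp.
  have := sqn_ge0 w; set s := sqn w => hs.
  have ht2 : t ^+ 2 <= 1 by rewrite expr2; nra.
  by rewrite ler_piMl.
move=> h; have := lt_le_trans hlt (le_trans hDq h); by rewrite ltxx.
Qed.
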